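(* Let $R$ be an associative ring with identity and involution $*$, and let $a\in R^{\#}\cap R^{\dagger}$. Then $a\in R^{SEP}$ if and only if $a^{\dagger}a(a^{\dagger})^*a^{\dagger}\in PE(R)$.
   Context: An involution on $R$ is a map $x\mapsto x^*$ with $(x^* )^*=x$, $(x+y)^*=x^*+y^*$, $(xy)^*=y^*x^*$. An element $a$ is Moore–Penrose invertible if there is $b$ with $aba=a$, $bab=b$, $(ab)^*=ab$, $(ba)^*=ba$; such $b$ is unique, denoted $a^{\dagger}$, and $R^{\dagger}$ is the set of such $a$. An element $a$ is group invertible if there is $b$ with $aba=a$, $bab=b$, $ab=ba$; such $b$ is unique, denoted $a^{\#}$, and $R^{\#}$ is the set of such $a$. $PE(R)=\{e\in R: e^2=e=e^*\}$ is the set of projections. For $a\in R^{\#}\cap R^{\dagger}$, $a$ is SEP if $a^*=a^{\dagger}=a^{\#}$; $R^{SEP}$ denotes the set of SEP elements. *)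

(* Defs.v *)
From mathcomp Require Import all_boot all_algebra.
Set Implicit Arguments. Unset Strict Implicit. Unset Printing Implicit Defensive.
Import GRing.Theory.
Local Open Scope ring_scope.

Definition involution (R : nzRingType) (inv : R -> R) : Prop :=
  [/\ forall x, inv (inv x) = x,
      forall x y, inv (x + y) = inv x + inv y
    & forall x y, inv (x * y) = inv y * inv x].

Definition is_MP (R : nzRingType) (st : R -> R) (a b : R) : Prop :=
  [/\ a * b * a = a, b * a * b = b, st (a * b) = a * b & st (b * a) = b * a].

Definition is_group_inv (R : nzRingType) (a b : R) : Prop :=
  [/\ a * b * a = a, b * a * b = b & a * b = b * a].

Definition MP_invertible (R : nzRingType) (st : R -> R) (a : R) : Prop :=
  exists b, is_MP st a b.

Definition group_invertible (R : nzRingType) (a : R) : Prop :=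
  exists b, is_group_inv a b.

Definition projection (R : nzRingType) (st : R -> R) (e : R) : Prop :=
  e * e = e /\ e = st e.

(* a is SEP: a is group and MP invertible and a* = a^dagger = a^#.
   Since MP and group inverses are unique, this says a* is both the
   MP inverse and the group inverse of a. *)
Definition SEP (R : nzRingType) (st : R -> R) (a : R) : Prop :=
  [/\ group_invertible a, MP_invertible st a,
      is_MP st a (st a) & is_group_inv a (st a)].

(* Main.v *)
Require Import Defs.
From mathcomp Require Import all_boot all_algebra.
Local Open Scope ring_scope.
Import GRing.Theory.

Lemma MP_uniq (R : nzRingType) (st : R -> R) (a b d : R) :
  involution st -> is_MP st a b -> is_MP st a d -> b = d.
Proof.
case=> sK sD sM [H1 H2 H3 H4] [D1 D2 D3 D4].
have E1 : st a = st a * (a * d) by rewrite -D3 -sM D1.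
have E2 : st a = b * a * st a by rewrite -H4 -sM mulrA H1.
have Hb : b = b * a * d.
  have -> : b * a * d = b * (a * b * (a * d)) by rewrite [a * b * (a * d)]mulrA H1 mulrA.
  by rewrite -H3 sM -mulrA -E1 -sM H3 mulrA H2.
have Hd : d = b * a * d.
  rewrite -{1}D2 -D4 sM E2 -(mulrA (b * a)) -sM D4.
  by rewrite mulrA -[b * a * d]mulrA -[b * (a * d) * a]mulrA D1 mulrA.
by rewrite Hb -Hd.
Qed.

Lemma abs_lemma (R : nzRingType) (e f q q' : R) :
  e * e = e -> e * f = f * e -> f * e = f * e * f ->
  e * f * q = e -> q' * e * f = f -> e = f.
Proof.
move=> ee ef fef efq qef.
have h1 : f * e = e.
  have -> : f * e = f * (e * f * q) by rewrite efq.
  by rewrite !mulrA -fef -ef.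
have h2 : f * e = f.
  rewrite -{1}qef -mulrA -ef mulrA -(mulrA q' e e) ee //.
by rewrite -h1 h2.
Qed.

Arguments abs_lemma {R e f q q'}.
Arguments MP_uniq {R st a b d}.

Theorem theorem2p2 (R : nzRingType) (st : R -> R) (a adag : R) :
  involution st ->
  group_invertible a ->
  is_MP st a adag ->
  (SEP st a <-> projection st (adag * a * st adag * adag)).
Proof.
move=> inv Gi MP; have [sK sD sM] := inv.
have [H1 H2 H3 H4] := MP.
set b := adag in H1 H2 H3 H4 MP *.
have H1r x : a * (b * (a * x)) = a * x by rewrite !mulrA H1.
split.
  case=> _ _ M G.
  have Sa : st a = b by symmetry; exact: MP_uniq inv MP M.
  rewrite Sa in G; case: G => _ _ G3.
  have -> : st b = a by rewrite -Sa sK.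
  have -> : b * a * a * b = a * b by rewrite -G3 H1.
  by split; [rewrite mulrA H1 | rewrite H3].
case=> Pm Pe.
have [g [G1 G2 G3]] := Gi.
set c := st b in Pm Pe *.
have Hc1 : a * b * c = c by rewrite -H3 -sM mulrA H2.
have Hc2 : c * (b * a) = c by rewrite -H4 -sM H2.
have Hca : c * st a = a * b by rewrite -sM H3.
have Hac : st a * c = b * a by rewrite -sM H4.
have Key1 : a * st a * c * b = a * b by rewrite -(mulrA a) Hac mulrA H1.
have Key2 : c * b * a * st a = a * b by rewrite -(mulrA c b a) Hc2 Hca.
have HA1 : a * b * (c * b) = c * b by rewrite mulrA Hc1.
have Pst : st (b * a * c * b) = c * b * (b * a).
  by rewrite sM (sM (b * a)) sK H4 mulrA.
have EC : b * a * (c * b) = c * b * (b * a) by rewrite mulrA -Pst -Pe.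
have StepB : b * a * (c * b) = a * b * (b * a) * (c * b).
  have -> : a * b * (b * a) * (c * b) = a * b * (c * b) * (b * a) by rewrite -mulrA EC mulrA.
  by rewrite HA1 EC.
have K2x x : x * (c * b) * (a * st a) = x * (a * b).
  by rewrite -mulrA [c * b * _]mulrA Key2.
have EF : b * a * (a * b) = a * b * (b * a) * (a * b).
  by rewrite -(K2x (b * a)) StepB K2x.
have FE : a * b * (b * a) = a * b * (b * a) * (a * b).
  have := congr1 st EF.
  rewrite sM H3 H4 sM H3 (sM (a * b) (b * a)) H3 H4 .
  by move=> h; rewrite {1}h; exact: mulrA.
have Eq : b * a * (a * g) = b * a by rewrite G3 -mulrA (mulrA a) G1.
have Eefq : b * a * (a * b) * (a * g) = b * a by rewrite -{2}Eq -!mulrA H1r.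
have Eqef : g * a * (b * a) * (a * b) = a * b.
  by rewrite -!mulrA H1r !mulrA -G3 G1.
have ee : b * a * (b * a) = b * a by rewrite mulrA H2.
have Eeq : b * a = a * b.
  exact: (abs_lemma ee (etrans EF (esym FE)) FE Eefq Eqef).
have CB2 : c * b * (c * b) = c * b.
  by move: Pm; rewrite Eeq Hc1.
have CB : c * b = a * b.
  transitivity (a * st a * c * b * (c * b)); first by rewrite Key1 HA1.
  by rewrite -[a * st a * c * b]mulrA -mulrA CB2 mulrA Key1.
have Ca : c = a by rewrite -Hc2 mulrA CB H1.
have Sa : st a = b by rewrite -Ca /c sK.
split => //; first by exists b.
  by rewrite Sa.
by rewrite Sa; split.
Qed.
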